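(* Let $p$ be a prime, $q=p$ (i.e. $n=1$), $r=1$, and let $d$ be a natural number with $(d,p)=1$. Let $f$ be chosen uniformly at random from $\mathcal{G}_d$ and let $N(f)=(\#C_f(\mathbb{F}_{p})-1)/p$. As $p$ and $d$ both tend to infinity, $N(f)$ converges in distribution to the Poisson distribution with mean $1$, i.e. $\mathbb{P}(N=m)=e^{-1}/m!$.
   Context: $\mathcal{G}_d$ is the set of monic polynomials of degree $d$ in $\mathbb{F}_q[x]$. For $f\in\mathbb{F}_q[x]$ of degree prime to $p$, $C_f$ is the normalisation of the projective closure of the affine curve $y^p-y=f(x)$ over $\mathbb{F}_q$; its number of $\mathbb{F}_{q^r}$-rational points is congruent to $1$ modulo $p$. *)

(* Defs.v *)
From HB Require Import structures.
From mathcomp Require Import all_boot all_order all_algebra.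
From mathcomp Require Import reals sequences.
Set Implicit Arguments. Unset Strict Implicit. Unset Printing Implicit Defensive.
Import Order.TTheory GRing.Theory Num.Theory.
Local Open Scope ring_scope.

(* The monic polynomial of degree d over F_p with lower coefficients c:
   x^d + sum_{i<d} c_i x^i.  c ranges bijectively over G_d. *)
Definition monic_of (p d : nat) (c : {ffun 'I_d -> 'F_p}) : {poly 'F_p} :=
  'X^d + \sum_(i < d) (c i)%:P * 'X^i.

Definition AS_affine_points (p : nat) (f : {poly 'F_p}) : nat :=
  #|[set xy : 'F_p * 'F_p | xy.2 ^+ p - xy.2 == f.[xy.1]]|.

(* #C_f(F_p): the smooth model has exactly one point above x = infinity
   (deg f prime to p, total ramification), and it is F_p-rational. *)
Definition AS_points (p : nat) (f : {poly 'F_p}) : nat :=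
  (AS_affine_points f).+1.

Definition Nf (p : nat) (f : {poly 'F_p}) : nat :=
  ((AS_points f - 1) %/ p)%N.

Definition prob_N (R : realType) (p d m : nat) : R :=
  (#|[set c : {ffun 'I_d -> 'F_p} | Nf (monic_of c) == m]|)%:R /
  (#|[set: {ffun 'I_d -> 'F_p}]|)%:R.

(* Main.v *)
Require Import Defs.
From HB Require Import structures.
From mathcomp Require Import all_boot all_order all_algebra all_field.
From mathcomp Require Import reals sequences topology normedtype.
From mathcomp Require Import ring lra zify.
Set Implicit Arguments. Unset Strict Implicit. Unset Printing Implicit Defensive.
Import Order.TTheory GRing.Theory Num.Theory.
Local Open Scope ring_scope.

Lemma Fp_fermat (p : nat) (pr : prime p) (x : 'F_p) : x ^+ p = x.
Proof. have h := expf_card x. by rewrite (card_Fp pr) in h. Qed.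

Definition Zs (p : nat) (f : {poly 'F_p}) : {set 'F_p} := [set x | root f x].

Lemma Nf_Zs (p : nat) (pr : prime p) (f : {poly 'F_p}) : Nf f = #|Zs f|.
Proof.
rewrite /Nf /AS_points /AS_affine_points subSS subn0.
have -> : [set xy : 'F_p * 'F_p | xy.2 ^+ p - xy.2 == f.[xy.1]] = setX (Zs f) setT.
  apply/setP => -[x y]; rewrite !inE /= Fp_fermat // subrr andbT eq_sym.
  by rewrite /root.
by rewrite cardsX cardsT card_Fp // mulnK // prime_gt0.
Qed.
Lemma sum_subsets_card (R : nzRingType) (T : finType) (B : {set T}) (f : nat -> R) :
  \sum_(A : {set T} | A \subset B) f #|A| =
  \sum_(k < #|B|.+1) 'C(#|B|, k)%:R * f k.
Proof.
rewrite (partition_big (fun A : {set T} => (inord #|A| : 'I_#|B|.+1)) predT) //=.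
apply: eq_bigr => k _.
rewrite (eq_big (fun A => A \in [set A : {set T} | A \subset B & #|A| == k])
   (fun _ => f k)).
- by rewrite sumr_const cards_draws mulr_natl.
- move=> A. rewrite in_set; case sAB: (A \subset B) => //=.
  by rewrite -val_eqE /= inordK // ltnS subset_leq_card.
- move=> A /andP [sAB /eqP <-]; rewrite inordK // ltnS subset_leq_card //.
Qed.
Lemma binmul (n k m : nat) : (m <= k)%N -> (k <= n)%N ->
  ('C(n, k) * 'C(k, m) = 'C(n, m) * 'C(n - m, k - m))%N.
Proof.
move=> mk kn.
have Hy := bin_fact mk. have Hx := bin_fact kn.
have Hz := @bin_fact (n - m) (k - m) (leq_sub2r m kn).
have Ht := @bin_fact n m (leq_trans mk kn).
have e1 : (n - m - (k - m) = n - k)%N by lia.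
rewrite e1 in Hz.
have pos : (0 < m`! * (k - m)`! * (n - k)`!)%N by rewrite !muln_gt0 !fact_gt0.
apply/eqP; rewrite -(eqn_pmul2r pos); apply/eqP.
transitivity n`!.
  by rewrite -Hx -Hy; ring.
by rewrite -Ht -Hz; ring.
Qed.

Lemma alt_binom0 (R : nzRingType) (r : nat) :
  \sum_(j < r.+1) (-1) ^+ j * ('C(r, j))%:R = (r == 0)%:R :> R.
Proof.
have := exprD1n (-1 : R) r; rewrite addNr expr0n => ->.
by apply: eq_bigr => i _; rewrite mulr_natr.
Qed.

Lemma reindex_from (R : nzRingType) (F : nat -> R) (m n : nat) :
  (m <= n)%N -> (forall k, (k < m)%N -> F k = 0) ->
  \sum_(k < n.+1) F k = \sum_(j < (n - m).+1) F (m + j)%N.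
Proof.
move=> mn F0.
rewrite -(big_mkord xpredT) -(big_mkord xpredT (fun j => F (m + j)%N)).
rewrite (@big_cat_nat _ _ _ m) //=; last by rewrite ltnW.
rewrite big_nat_cond big1 ?add0r; last by move=> i /andP [/andP [_ h] _]; apply: F0.
rewrite (_ : \sum_(m <= i < n.+1) F i = \sum_(0 + m <= i < n.+1) F i); last by rewrite add0n.
rewrite big_addn subSn //.
by apply: eq_bigr => i _; rewrite addnC.
Qed.

Lemma alt_bin (R : comNzRingType) (n m : nat) :
  \sum_(k < n.+1) 'C(n, k)%:R * ((-1) ^+ (k - m) * 'C(k, m)%:R) = (n == m)%:R :> R.
Proof.
case: (ltnP n m) => [nm | mn].
  rewrite big1; first by rewrite ltn_eqF.
  move=> k _; rewrite (@bin_small k m) ?mulr0 //.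
  have kn : (k <= n)%N by rewrite -ltnS. by apply: leq_ltn_trans kn nm.
rewrite (@reindex_from _ (fun k => 'C(n,k)%:R * ((-1)^+(k-m) * 'C(k,m)%:R)) m n) //; last first.
  by move=> k km; rewrite (@bin_small k m) ?mulr0.
transitivity ('C(n, m)%:R * \sum_(j < (n - m).+1) (-1) ^+ j * ('C(n - m, j))%:R : R).
  rewrite mulr_sumr; apply: eq_bigr => j _.
  rewrite /= addKn [LHS]mulrCA -natrM binmul ?leq_addr //.
    by rewrite addKn natrM mulrCA.
  have := ltn_ord j; rewrite ltnS => hj; move: (nat_of_ord j) hj => jj hj; lia.
rewrite alt_binom0 subn_eq0.
case: (eqVneq n m) => [-> | nem]; first by rewrite binn leqnn mulr1.
have -> : (n <= m)%N = false by apply/negbTE; rewrite -ltnNge ltn_neqAle eq_sym nem.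
by rewrite mulr0.
Qed.
Lemma fiber_card (V W : finZmodType) (L : V -> W) (w : W) :
  (forall x y, L (x - y) = L x - L y) -> (forall w, exists x, L x = w) ->
  (#|[set x | L x == w]| * #|W| = #|V|)%N.
Proof.
move=> Ladd Lsurj.
have L0 : L 0 = 0 by rewrite -(subrr 0) Ladd subrr.
have LN : forall y, L (- y) = - L y by move=> y; rewrite -sub0r Ladd L0 sub0r.
have LD : forall x y, L (x + y) = L x + L y.
  by move=> x y; have := Ladd x (- y); rewrite opprK LN opprK.
have fib : forall w', #|[set x | L x == w']| = #|[set x | L x == 0]|.
  move=> w'; have [xw Hxw] := Lsurj w'.
  have := card_imset [set x | L x == 0] (addIr xw) => <-.
  apply: eq_card => x.
  rewrite inE; apply/idP/imsetP.
    move=> /eqP Lx; exists (x - xw); last by rewrite subrK.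
    by rewrite inE Ladd Lx Hxw subrr.
  move=> [y]; rewrite inE => /eqP Ly ->.
  by rewrite LD Ly Hxw add0r.
rewrite -[RHS]sum1_card (partition_big L predT) //=.
transitivity (\sum_(j : W) #|[set x | L x == w]|).
  by rewrite sum_nat_const mulnC.
apply: eq_bigr => j _; rewrite fib -(fib j) -sum1_card; apply: eq_bigl => x.
by rewrite inE.
Qed.
Definition evalv (F : comNzRingType) (d k : nat) (t : 'I_k -> F) (v : 'rV[F]_d) : 'rV[F]_k :=
  \row_j (rVpoly v).[t j].

Lemma evalvB (F : comNzRingType) d k t (x y : 'rV[F]_d) :
  evalv (k:=k) t (x - y) = evalv t x - evalv t y.
Proof. by apply/rowP => j; rewrite !mxE raddfB hornerD hornerN. Qed.

Lemma evalv_inj (F : fieldType) k (t : 'I_k -> F) : injective t ->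
  injective (@evalv F k k t).
Proof.
move=> tinj h1 h2 e.
have P0 : rVpoly (h1 - h2) = 0.
  apply/eqP; apply/negPn/negP => nz.
  have := max_poly_roots nz (rs := [seq t j | j <- enum 'I_k]).
  rewrite size_map size_enum_ord.
  have -> : all (root (rVpoly (h1 - h2))) [seq t j | j <- enum 'I_k].
    apply/allP => x /mapP [j _ ->]; rewrite /root raddfB hornerD hornerN.
    have := congr1 (fun v : 'rV_k => v 0 j) e; rewrite !mxE => ->.
    by rewrite subrr.
  rewrite map_inj_uniq // ?enum_uniq //= => /(_ isT isT).
  by rewrite ltnNge size_poly.
apply/rowP => i.
have := congr1 (fun P : {poly F} => P`_i) P0; rewrite coef0 coef_rVpoly_ord !mxE => /eqP.
by rewrite subr_eq0 => /eqP.
Qed.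

Lemma evalv_surj (F : finFieldType) d k (t : 'I_k -> F) : injective t -> (k <= d)%N ->
  forall w, exists v, @evalv F d k t v = w.
Proof.
move=> tinj kd w.
have := inj_card_onto (evalv_inj tinj) (leqnn _) w => /codomP [h ->].
exists (poly_rV (rVpoly h)); apply/rowP => j; rewrite !mxE poly_rV_K //.
exact: leq_trans (size_poly _ _) kd.
Qed.

Lemma rVpoly_sum (F : nzRingType) d (v : 'rV[F]_d) : rVpoly v = \sum_(i < d) v 0 i *: 'X^i.
Proof.
rewrite {1}(row_sum_delta v) linear_sum; apply: eq_bigr => i _.
by rewrite linearZ /= rVpoly_delta.
Qed.

Lemma monic_ofE (p d : nat) (c : {ffun 'I_d -> 'F_p}) :
  monic_of c = 'X^d + rVpoly (\row_i c i).
Proof.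
rewrite /monic_of rVpoly_sum; congr (_ + _); apply: eq_bigr => i _.
by rewrite mxE mul_polyC.
Qed.

Lemma count_T (p : nat) (pr : prime p) (d : nat) (T : {set 'F_p}) :
  #|[set c : {ffun 'I_d -> 'F_p} | T \subset Zs (monic_of c)]| =
  if (#|T| <= d)%N then (p ^ (d - #|T|))%N else 0%N.
Proof.
pose tof (v : 'rV['F_p]_d) : {ffun 'I_d -> 'F_p} := [ffun i => v 0 i].
have tof_inj : injective tof.
  by move=> u v e; apply/rowP => i; have := congr1 (fun f : {ffun 'I_d -> 'F_p} => f i) e; rewrite !ffunE.
have tofE : forall v, monic_of (tof v) = 'X^d + rVpoly v.
  move=> v; rewrite monic_ofE; congr (_ + rVpoly _); apply/rowP => i; by rewrite !mxE ffunE.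
have -> : #|[set c : {ffun 'I_d -> 'F_p} | T \subset Zs (monic_of c)]| =
          #|[set v : 'rV_d | T \subset Zs ('X^d + rVpoly v)]|.
  rewrite -(card_imset _ tof_inj); apply: eq_card => c; rewrite inE.
  apply/idP/imsetP.
    move=> h; exists (\row_i c i); last by apply/ffunP => i; rewrite ffunE mxE.
    rewrite inE -tofE (_ : tof (\row_i c i) = c) //.
    by apply/ffunP => i; rewrite ffunE mxE.
  by move=> [v]; rewrite inE => h ->; rewrite tofE.
case: leqP => [kd | dk].
  pose t := fun j : 'I_#|T| => (enum_val j : 'F_p).
  have tinj : injective t by exact: enum_val_inj.
  pose w0 : 'rV['F_p]_#|T| := \row_j (- (t j) ^+ d).
  have -> : #|[set v : 'rV_d | T \subset Zs ('X^d + rVpoly v)]| =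
            #|[set v : 'rV_d | evalv t v == w0]|.
    apply: eq_card => v; rewrite !inE.
    apply/subsetP/eqP.
      move=> sub; apply/rowP => j; rewrite !mxE.
      have := sub _ (enum_valP j); rewrite inE /root hornerD hornerXn => /eqP.
      by move/eqP; rewrite addrC addr_eq0 => /eqP.
    move=> e x xT; rewrite inE /root hornerD hornerXn.
    have := congr1 (fun u : 'rV_#|T| => u 0 (enum_rank_in xT x)) e.
    rewrite !mxE /t enum_rankK_in // => ->.
    by rewrite addrN.
  have := @fiber_card _ _ (@evalv _ d _ t) w0 (@evalvB _ _ _ t) (evalv_surj tinj kd).
  rewrite !card_mx !card_Fp // !mul1n => h.
  apply/eqP; rewrite -(@eqn_pmul2r (p ^ #|T|)) ?expn_gt0 ?prime_gt0 //.
  by rewrite h -expnD subnK.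
apply/eqP; rewrite cards_eq0; apply/eqP/setP => v; rewrite !inE.
apply/negbTE/negP => sub.
have nz : 'X^d + rVpoly v != 0.
  rewrite -size_poly_eq0 size_polyDl size_polyXn // ltnS; exact: size_poly.
have := max_poly_roots nz (rs := enum T).
rewrite enum_uniq -cardE.
have -> : all (root ('X^d + rVpoly v)) (enum T).
  by apply/allP => x; rewrite mem_enum => /(subsetP sub); rewrite inE.
rewrite size_polyDl size_polyXn ?ltnS ?size_poly // => /(_ isT isT) h.
by move: h; rewrite ?ltnS leqNgt dk.
Qed.

Lemma count_m (R : comNzRingType) (p : nat) (pr : prime p) (d m : nat) :
  (#|[set c : {ffun 'I_d -> 'F_p} | Nf (monic_of c) == m]|)%:R =
  \sum_(k < p.+1) 'C(p, k)%:R * (((-1) ^+ (k - m) * 'C(k, m)%:R) *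
      (if (k <= d)%N then (p ^ (d - k))%N else 0%N)%:R) :> R.
Proof.
pose w k : R := (-1) ^+ (k - m) * 'C(k, m)%:R.
pose g k : R := (if (k <= d)%N then (p ^ (d - k))%N else 0%N)%:R.
rewrite -sum1_card natr_sum big_mkcond /=.
transitivity (\sum_(c : {ffun 'I_d -> 'F_p}) \sum_(A : {set 'F_p}) ((A \subset Zs (monic_of c))%:R * w #|A|)).
  apply: eq_bigr => c _; rewrite inE Nf_Zs //.
  rewrite (_ : (if _ then 1 else 0) = (#|Zs (monic_of c)| == m)%:R :> R); last by case: eqP.
  rewrite -(alt_bin R).
  rewrite -(sum_subsets_card _ (fun k => w k)) big_mkcond /=.
  by apply: eq_bigr => A _; case: ifP; rewrite ?mul1r ?mul0r.
rewrite exchange_big /=.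
transitivity (\sum_(A : {set 'F_p}) w #|A| * g #|A|).
  apply: eq_bigr => A _; rewrite -mulr_suml mulrC; congr (_ * _).
  rewrite /g -count_T // -sum1_card natr_sum [RHS]big_mkcond /=.
  by apply: eq_bigr => c _; rewrite inE; case: (A \subset _).
rewrite (eq_bigl (fun A : {set 'F_p} => A \subset setT)); last by move=> A; rewrite subsetT.
rewrite (sum_subsets_card _ (fun k => w k * g k)) cardsT card_Fp //.
Qed.

Lemma trunc_sum (R : nzRingType) (F : nat -> R) (n N : nat) : (n <= N)%N ->
  (forall k, (n < k)%N -> (k <= N)%N -> F k = 0) ->
  \sum_(k < N.+1) F k = \sum_(k < n.+1) F k.
Proof.
move=> nN F0; rewrite -(big_mkord xpredT) -(big_mkord xpredT F).
rewrite (@big_cat_nat _ _ _ n.+1) //=.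
rewrite [X in _ + X = _]big_nat_cond [X in _ + X = _]big1 ?addr0 // => i /andP [/andP [h1 h2] _].
by apply: F0 => //; rewrite -ltnS.
Qed.

Lemma term_eq (R : numFieldType) (p d m j : nat) : (0 < p)%N -> (m + j <= d)%N ->
  'C(p, m + j)%:R * (((-1) ^+ (m + j - m) * 'C(m + j, m)%:R) *
      (if (m + j <= d)%N then (p ^ (d - (m + j)))%N else 0%N)%:R) / (p ^ d)%:R
  = (-1) ^+ j / (m`! * j`!)%:R * ((p ^_ (m + j))%:R / (p ^ (m + j))%:R) :> R.
Proof.
move=> p0 kd; rewrite kd addKn.
set k := (m + j)%N.
have e1 : ('C(p, k) * 'C(k, m) * (m`! * j`!) = p ^_ k)%N.
  rewrite -bin_ffact -mulnA; congr (_ * _).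
  have := @bin_fact k m (leq_addr _ _); rewrite /k addKn => ->; done.
have e2 : (p ^ (d - k) * p ^ k = p ^ d)%N by rewrite -expnD subnK.
rewrite -e1 -e2 !natrM.
have h1 : (m`!%:R : R) != 0 by rewrite pnatr_eq0 -lt0n fact_gt0.
have h2 : (j`!%:R : R) != 0 by rewrite pnatr_eq0 -lt0n fact_gt0.
have h3 : ((p ^ (d - k))%:R : R) != 0 by rewrite pnatr_eq0 -lt0n expn_gt0 p0.
have h4 : ((p ^ k)%:R : R) != 0 by rewrite pnatr_eq0 -lt0n expn_gt0 p0.
by field; rewrite ?h1 ?h2 ?h3 ?h4.
Qed.

Lemma prob_formula (R : numFieldType) (p : nat) (pr : prime p) (d m : nat) :
  (m <= minn p d)%N ->
  (#|[set c : {ffun 'I_d -> 'F_p} | Nf (monic_of c) == m]|)%:R /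
    (#|[set: {ffun 'I_d -> 'F_p}]|)%:R
  = \sum_(j < (minn p d - m).+1)
      (-1) ^+ j / (m`! * j`!)%:R * ((p ^_ (m + j))%:R / (p ^ (m + j))%:R) :> R.
Proof.
move=> hm.
rewrite cardsT card_ffun card_Fp // card_ord count_m // mulr_suml.
rewrite (@trunc_sum _ (fun k => 'C(p, k)%:R * (((-1) ^+ (k - m) * 'C(k, m)%:R) *
      (if (k <= d)%N then (p ^ (d - k))%N else 0%N)%:R) / (p ^ d)%:R) (minn p d)); last first.
- move=> k hk kp; have kd : (d < k)%N.
    move: hk; rewrite /minn; case: ifP => // _ h; lia.
  by rewrite leqNgt kd /= mulr0 mulr0 mul0r.
- exact: geq_minl.
rewrite (@reindex_from _ (fun k => 'C(p, k)%:R * (((-1) ^+ (k - m) * 'C(k, m)%:R) *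
      (if (k <= d)%N then (p ^ (d - k))%N else 0%N)%:R) / (p ^ d)%:R) m) //; last first.
  by move=> k km; rewrite (@bin_small k m) // !(mulr0, mul0r).
apply: eq_bigr => j _; apply: term_eq; first exact: prime_gt0.
have := ltn_ord j; rewrite ltnS => hj.
have : (minn p d <= d)%N by exact: geq_minr.
move: (nat_of_ord j) hj => jj; lia.
Qed.

Lemma fact_ge (n : nat) : (n <= n`!)%N.
Proof. case: n => // n; by rewrite factS leq_pmulr ?fact_gt0. Qed.

Lemma tail_fact (R : realFieldType) (a n : nat) : (1 <= a)%N ->
  \sum_(a.+1 <= j < a.+1 + n) (j`!%:R : R)^-1 <= a%:R^-1 - (a + n)%:R^-1.
Proof.
move=> a1; elim: n => [|n IH].
  by rewrite !addn0 big_geq // subrr.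
rewrite addnS big_nat_recr /=; last by rewrite leq_addr.
have h : ((a + n).+1`!%:R : R)^-1 <= (a + n)%:R^-1 - (a + n).+1%:R^-1.
  have p1 : (0 : R) < (a + n)%:R by rewrite ltr0n; lia.
  have p2 : (0 : R) < (a + n).+1%:R by rewrite ltr0n.
  have e : (a + n)%:R^-1 - (a + n).+1%:R^-1 = ((a + n).+1 * (a + n))%:R^-1 :> R.
    rewrite natrM; field; move: p1; rewrite natrD => p1; apply/andP; split; apply: lt0r_neq0; lra.
  rewrite e lef_pV2 ?posrE ?ltr0n ?fact_gt0 ?muln_gt0 //; last lia.
  by rewrite ler_nat factS leq_mul2l fact_ge orbT.
rewrite (le_trans (lerD IH h)) //.
by rewrite addrA subrK addnS.
Qed.

Lemma exp_tail (R : realType) (J : nat) : (1 <= J)%N ->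
  `|expR (-1) - series (exp_coeff (-1)) J.+1| <= J%:R^-1 :> R.
Proof.
move=> J1.
set S := series (exp_coeff (-1)) J.+1.
have key : forall n, (J.+1 <= n)%N ->
    `|series (exp_coeff (-1 : R)) n - S| <= J%:R^-1.
  move=> n hn; rewrite /S /series /=.
  rewrite (@big_cat_nat _ _ _ J.+1 0 n) //= addrAC subrr add0r.
  rewrite (le_trans (ler_norm_sum _ _ _)) //.
  have -> : n = (J.+1 + (n - J.+1))%N by rewrite subnKC.
  apply: (le_trans _ (_ : J%:R^-1 - (J + (n - J.+1))%:R^-1 <= J%:R^-1)); last first.
    by rewrite lerBlDr lerDl invr_ge0 ler0n.
  apply: (le_trans _ (@tail_fact R J (n - J.+1) J1)).
  apply: ler_sum => k _; rewrite /exp_coeff /= normrM normrX normrN normr1 expr1n mul1r.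
  by rewrite ger0_norm // invr_ge0 ler0n.
have cv := @is_cvg_series_exp_coeff R (-1).
rewrite ler_norml; apply/andP; split.
  rewrite lerBrDl; rewrite /expR; apply: limr_ge => //.
  exists J.+1 => // n /= hn; have := key n hn; rewrite ler_norml => /andP [h _]; lra.
rewrite lerBlDl; rewrite /expR; apply: limr_le => //.
exists J.+1 => // n /= hn; have := key n hn; rewrite ler_norml => /andP [_ h]; lra.
Qed.

Lemma ffact_le_exp (p k : nat) : (p ^_ k <= p ^ k)%N.
Proof.
elim: k => [|k IH]; first by [].
by rewrite ffactnSr expnSr leq_mul // leq_subr.
Qed.

Definition cf (R : realFieldType) (p k : nat) : R := (p ^_ k)%:R / (p ^ k)%:R.

Lemma cf_ge0 (R : realFieldType) p k : 0 <= cf R p k.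
Proof. by rewrite /cf divr_ge0 ?ler0n. Qed.

Lemma cf_le1 (R : realFieldType) p k : (0 < p)%N -> cf R p k <= 1.
Proof.
move=> p0; rewrite /cf ler_pdivrMr ?mul1r ?ltr0n ?expn_gt0 ?p0 //.
by rewrite ler_nat ffact_le_exp.
Qed.

Lemma step_ineq (R : realFieldType) (x K I : R) : 0 <= x -> x <= 1 -> 0 <= K -> 0 < I ->
  1 - x <= K ^+ 2 * I -> 1 - (x - x * K * I) <= (K + 1) ^+ 2 * I.
Proof.
move=> x0 x1 K0 I0 h.
have b0 : 0 <= K * I by rewrite mulr_ge0 // ltW.
have ab : x * K * I <= K * I by rewrite -mulrA ler_piMl.
have e : (K + 1) ^+ 2 * I = K ^+ 2 * I + 2 * (K * I) + I by ring.
rewrite e; lra.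
Qed.

Lemma cf_bound (R : realFieldType) p k : (0 < p)%N -> 1 - cf R p k <= (k ^ 2)%:R / p%:R.
Proof.
move=> p0.
have P0 : (0 : R) < p%:R by rewrite ltr0n.
elim: k => [|k IH].
  by rewrite /cf ffactn0 expn0 divr1 subrr mul0r.
have x0 := cf_ge0 R p k; have x1 := cf_le1 R k p0.
rewrite natrX -natr1.
case: (ltnP k p) => kp.
  have e : cf R p k.+1 = cf R p k - cf R p k * k%:R * (p%:R)^-1.
    rewrite /cf ffactnSr expnSr !natrM (natrB _ (ltnW kp)).
    have h3 : ((p ^ k)%:R : R) != 0 by rewrite pnatr_eq0 -lt0n expn_gt0 p0.
    have h4 : (p%:R : R) != 0 by rewrite lt0r_neq0.
    by field; rewrite h3 h4.
  rewrite e; apply: step_ineq; [exact: x0|exact: x1|by rewrite ler0n|by rewrite invr_gt0|].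
  by rewrite -natrX.
have h1 : (p <= k.+1 ^ 2)%N.
  rewrite expnS expn1; nia.
have : 1 - cf R p k.+1 <= 1 by rewrite lerBlDr lerDl cf_ge0.
move/le_trans; apply.
rewrite natr1 -natrX ler_pdivlMr // mul1r ler_nat //.
Qed.

Lemma term_bound (R : realType) (m N p j : nat) : (0 < p)%N ->
  `|(-1) ^+ j / (j`!)%:R * (cf R p (m + j) - 1)| <=
  (if (j <= N)%N then ((m + N) ^ 2)%:R / p%:R else (j`!%:R)^-1 : R).
Proof.
move=> p0.
have c0 := cf_ge0 R p (m + j); have c1 := cf_le1 R (m + j) p0.
have cb := cf_bound R (m + j) p0.
have f0 : (0 : R) < (j`!%:R)^-1 by rewrite invr_gt0 ltr0n fact_gt0.
have f1 : (j`!%:R : R)^-1 <= 1 by rewrite invf_le1 ?ltr0n ?fact_gt0 // ler1n fact_gt0.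
rewrite normrM normrM normrX normrN normr1 expr1n mul1r (ger0_norm (ltW f0)).
rewrite distrC (ger0_norm); last by rewrite subr_ge0.
case: ifP => jN.
  apply: (le_trans (_ : _ <= 1 - cf R p (m + j))).
    by rewrite ler_piMl // subr_ge0.
  apply: (le_trans cb); rewrite ler_pM2r ?invr_gt0 ?ltr0n // ler_nat.
  by rewrite leq_exp2r // leq_add2l.
by rewrite mulrC ler_piMl ?(ltW f0) // lerBlDr lerDl.
Qed.

Lemma sum_b (R : realType) (m N p J : nat) : (1 <= N)%N -> (N <= J)%N ->
  \sum_(j < J.+1) (if (j <= N)%N then ((m + N) ^ 2)%:R / p%:R else (j`!%:R)^-1 : R)
   <= ((N.+1 * (m + N) ^ 2)%N)%:R / p%:R + N%:R^-1.
Proof.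
move=> N1 NJ.
rewrite -(big_mkord xpredT (fun j => (if (j <= N)%N then ((m + N) ^ 2)%:R / p%:R else (j`!%:R)^-1 : R))).
rewrite (@big_cat_nat _ _ _ N.+1) //=.
apply: lerD.
  rewrite big_nat_cond (eq_bigr (fun _ => ((m + N) ^ 2)%:R / p%:R)); last first.
    by move=> i /andP [/andP [_ h] _]; rewrite ltnS in h; rewrite h.
  by rewrite -big_nat_cond sumr_const_nat subn0 natrM -mulr_natl !mulr1 -mulrA [in X in _ <= X]mulr_natl.

rewrite big_nat_cond (eq_bigr (fun j => (j`!%:R)^-1)); last first.
  by move=> i /andP [/andP [h _] _]; rewrite leqNgt h.
rewrite -big_nat_cond.
have -> : J.+1 = (N.+1 + (J - N))%N by rewrite addSn subnKC.
apply: (le_trans (@tail_fact R N (J - N) N1)).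
by rewrite lerBlDr lerDl invr_ge0 ler0n.
Qed.

Lemma main_bound (R : realType) (m N p J : nat) : (1 <= N)%N -> (N <= J)%N -> (0 < p)%N ->
  `| \sum_(j < J.+1) (-1) ^+ j / (m`! * j`!)%:R * cf R p (m + j) - expR (-1) / (m`!)%:R |
   <= ((N.+1 * (m + N) ^ 2)%N)%:R / p%:R + 2 * N%:R^-1.
Proof.
move=> N1 NJ p0.
set S := \sum_(j < J.+1) (-1) ^+ j / (j`!)%:R * cf R p (m + j).
set T := \sum_(j < J.+1) (-1) ^+ j / (j`!)%:R * (cf R p (m + j) - 1).
set S1 := series (exp_coeff (-1 : R)) J.+1.
have S1E : S1 = \sum_(j < J.+1) (-1) ^+ j / (j`!)%:R.
  by rewrite /S1 /series /= big_mkord.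
have e1 : \sum_(j < J.+1) (-1) ^+ j / (m`! * j`!)%:R * cf R p (m + j) = (m`!%:R)^-1 * S.
  rewrite /S mulr_sumr; apply: eq_bigr => j _; rewrite natrM invfM.
  by rewrite !mulrA (mulrC _ (m`!%:R^-1)).
have e2 : S = T + S1.
  rewrite S1E /T -big_split /=; apply: eq_bigr => j _.
  by rewrite mulrBr mulr1 subrK.
have mf0 : (0 : R) < (m`!%:R)^-1 by rewrite invr_gt0 ltr0n fact_gt0.
have mf1 : (m`!%:R : R)^-1 <= 1 by rewrite invf_le1 ?ltr0n ?fact_gt0 // ler1n fact_gt0.
rewrite e1 (mulrC (expR (-1))) -mulrBr normrM (ger0_norm (ltW mf0)).
apply: (le_trans (ler_piMl (normr_ge0 _) mf1)).
rewrite e2 -addrA.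
apply: (le_trans (ler_normD _ _)).
have hT : `|T| <= ((N.+1 * (m + N) ^ 2)%N)%:R / p%:R + N%:R^-1.
  apply: (le_trans (ler_norm_sum _ _ _)).
  apply: (le_trans _ (sum_b R m p N1 NJ)).
  by apply: ler_sum => j _; apply: term_bound.
have hE : `|S1 - expR (-1)| <= N%:R^-1.
  rewrite distrC; apply: (le_trans (exp_tail R (leq_trans N1 NJ))).
  by rewrite lef_pV2 ?posrE ?ltr0n ?ler_nat //; lia.
have -> : 2 * N%:R^-1 = N%:R^-1 + N%:R^-1 :> R by rewrite mulr2n mulrDl mul1r.
by rewrite addrA lerD.
Qed.


Unset Implicit Arguments.
Set Strict Implicit.

Theorem theorem6 (R : realType) (m : nat) (eps : R) :
  0 < eps ->
  exists M : nat, forall p d : nat,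
    prime p -> coprime d p -> (M <= p)%N -> (M <= d)%N ->
    `| prob_N R p d m - expR (-1) / (m`!)%:R | < eps.
Proof.
move=> e0.
pose N := (Num.bound (4 / eps)).+1.
have N1 : (1 <= N)%N by [].
have hN : N%:R^-1 < eps / 4.
  have h4 : 0 < 4 / eps by rewrite divr_gt0.
  have hb := archi_boundP (ltW h4).
  have hN' : 4 / eps < N%:R by apply: (lt_le_trans hb); rewrite ler_nat.
  rewrite -(invf_div 4 eps) ltf_pV2 ?posrE ?ltr0n //.
pose B : R := ((N.+1 * (m + N) ^ 2)%N)%:R.
have B0 : 0 <= B by rewrite ler0n.
pose M := maxn (N + m) (Num.bound (2 * B / eps)).+1.
exists M => p d pr _ hp hd.
have p0 : (0 < p)%N by exact: prime_gt0.
have hK : (N + m <= minn p d)%N.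
  by rewrite leq_min (leq_trans (leq_maxl _ _) hp) (leq_trans (leq_maxl _ _) hd).
rewrite /prob_N prob_formula //; last by lia.
have NJ : (N <= minn p d - m)%N by lia.
apply: (le_lt_trans (@main_bound R m N p (minn p d - m) N1 NJ p0)).
have hp' : 2 * B / eps < p%:R.
  have hb := archi_boundP (divr_ge0 (mulr_ge0 (ler0n _ 2) B0) (ltW e0)).
  apply: (lt_le_trans hb); rewrite ler_nat.
  apply: leq_trans hp; apply: leq_trans (leq_maxr _ _); exact: leqnSn.
have P0 : (0 : R) < p%:R by rewrite ltr0n.
have hB : B / p%:R < eps / 2.
  rewrite ltr_pdivrMr // (_ : eps / 2 * p%:R = (p%:R * eps) / 2); last by ring.
  move: hp'; rewrite ltr_pdivrMr // => hp'.
  lra.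
rewrite -/B; lra.
Qed.
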